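(* Let $X_1,\dots,X_n$ be features and $Y$ a target that is not a.s. constant, $\mathcal{F}=\{1,\dots,n\}$. Then for every $i\in\mathcal{F}$, $$\frac{\mathrm{Dep}(X_i,Y)}{n}\le \mathrm{FI}(i)\le \mathrm{Dep}(\mathcal{F},Y).$$
   Context: All random variables are discrete with finite support and defined on a common probability space. For discrete random variables (or random vectors) $X$ and $Y$, define $$\mathrm{UD}(X,Y):=\sum_x p_X(x)\sum_y \bigl|p_{Y\mid X=x}(y)-p_Y(y)\bigr|,$$ and, when $Y$ is not almost surely constant, $\mathrm{Dep}(X,Y):=\mathrm{UD}(X,Y)/\mathrm{UD}(Y,Y)$. Given features $X_1,\dots,X_n$ with index set $\mathcal{F}=\{1,\dots,n\}$ and $S\subseteq\mathcal{F}$, write $X_S=(X_i)_{i\in S}$ ($X_\emptyset$ constant) and $\mathrm{Dep}(S,Y):=\mathrm{Dep}(X_S,Y)$. The Berkelmans–Pries feature importance is $$\mathrm{FI}(i):=\sum_{S\subseteq\mathcal{F}\setminus\{i\}}\frac{|S|!\,(n-|S|-1)!}{n!}\bigl(\mathrm{Dep}(S\cup\{i\},Y)-\mathrm{Dep}(S,Y)\bigr).$$ *)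

(* Defs.v *)
From HB Require Import structures.
From mathcomp Require Import all_boot all_order all_algebra.
Set Implicit Arguments. Unset Strict Implicit. Unset Printing Implicit Defensive.
Import Order.TTheory GRing.Theory Num.Theory.
Local Open Scope ring_scope.

Definition is_prob (R : realFieldType) (Omega : finType) (P : {ffun Omega -> R}) : Prop :=
  (forall w, 0 <= P w) /\ \sum_(w : Omega) P w = 1.

Section Dep.
Variables (R : realFieldType) (Omega : finType) (P : {ffun Omega -> R}).

Definition pmf (A : eqType) (X : Omega -> A) (x : A) : R :=
  \sum_(w : Omega | X w == x) P w.

Definition pmf2 (A B : eqType) (X : Omega -> A) (Y : Omega -> B) (x : A) (y : B) : R :=
  \sum_(w : Omega | (X w == x) && (Y w == y)) P w.

Definition vals (A : eqType) (X : Omega -> A) : seq A := undup [seq X w | w <- enum Omega].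

Definition cond_pmf (A B : eqType) (X : Omega -> A) (Y : Omega -> B) (x : A) (y : B) : R :=
  pmf2 X Y x y / pmf X x.

Definition UD (A B : eqType) (X : Omega -> A) (Y : Omega -> B) : R :=
  \sum_(x <- vals X) pmf X x *
     \sum_(y <- vals Y) `| cond_pmf X Y x y - pmf Y y |.

Definition Dep (A B : eqType) (X : Omega -> A) (Y : Omega -> B) : R :=
  UD X Y / UD Y Y.

Definition as_constant (B : eqType) (Y : Omega -> B) : Prop :=
  exists y : B, pmf Y y = 1.

Variables (n : nat) (T : 'I_n -> eqType) (X : forall i : 'I_n, Omega -> T i).

Definition XS (S : {set 'I_n}) (w : Omega) : seq {i : 'I_n & T i} :=
  [seq Tagged T (X i w) | i <- enum S].

Definition DepS (B : eqType) (S : {set 'I_n}) (Y : Omega -> B) : R := Dep (XS S) Y.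

Definition FI (B : eqType) (Y : Omega -> B) (i : 'I_n) : R :=
  \sum_(S : {set 'I_n} | i \notin S)
     ((#|S|`! * (n - #|S| - 1)`!)%:R / (n`!)%:R) *
     (DepS (i |: S) Y - DepS S Y).

End Dep.

(* Main.v *)
Require Import Defs.
From HB Require Import structures.
From mathcomp Require Import all_boot all_order all_algebra.
From mathcomp Require Import lra.
Set Implicit Arguments. Unset Strict Implicit. Unset Printing Implicit Defensive.
Import Order.TTheory GRing.Theory Num.Theory.
Local Open Scope ring_scope.

Section Aux.
Variables (R : realFieldType) (Omega : finType) (P : {ffun Omega -> R}).
Hypothesis hP : forall w, 0 <= P w.

Lemma part_sum (A : eqType) (X : Omega -> A) (F : Omega -> R) :
  \sum_w F w = \sum_(x <- vals X) \sum_(w | X w == x) F w.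
Proof.
under [RHS]eq_bigr => x _ do rewrite big_mkcond.
rewrite exchange_big /=; apply: eq_bigr => w _.
have hin : X w \in vals X by rewrite mem_undup; apply: map_f; rewrite mem_enum.
rewrite (bigD1_seq (X w) hin (undup_uniq _)) /= eqxx big1 ?addr0 //.
by move=> x hx; rewrite eq_sym (negbTE hx).
Qed.

Lemma abs_sum_sign (A : eqType) (X : Omega -> A) (g : Omega -> R) :
  \sum_(x <- vals X) `|\sum_(w | X w == x) g w| =
  \sum_w (if 0 <= \sum_(v | X v == X w) g v then 1 else -1) * g w.
Proof.
rewrite (part_sum X); apply: eq_bigr => x _.
rewrite [RHS](eq_bigr (fun w => (if 0 <= \sum_(v | X v == x) g v then 1 else -1) * g w)); last first.
  by move=> w /eqP ->.
rewrite -mulr_sumr; case: ifP => h; first by rewrite mul1r ger0_norm.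
by rewrite mulN1r ltr0_norm // ltNge h.
Qed.

Lemma sign_bound (A' : eqType) (X' : Omega -> A') (g c : Omega -> R) :
  (forall w, `|c w| <= 1) -> (forall w1 w2, X' w1 = X' w2 -> c w1 = c w2) ->
  \sum_w c w * g w <= \sum_(x <- vals X') `|\sum_(w | X' w == x) g w|.
Proof.
move=> hc hconst; rewrite (part_sum X'); apply: ler_sum => x _.
case: (pickP (fun w => X' w == x)) => [w0 hw0|h0]; last first.
  by rewrite big_pred0 // normr_ge0.
rewrite (eq_bigr (fun w => c w0 * g w)); last first.
  by move=> w hw; rewrite (hconst w w0) // (eqP hw) (eqP hw0).
rewrite -mulr_sumr; apply: le_trans (ler_norm _) _.
rewrite normrM; apply: le_trans (ler_wpM2r (normr_ge0 _) (hc w0)) _.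
by rewrite mul1r.
Qed.

Lemma pmf_ge0 (A : eqType) (X : Omega -> A) x : 0 <= pmf P X x.
Proof. by apply: sumr_ge0 => w _. Qed.

Definition hh (B : eqType) (Y : Omega -> B) y w := P w * ((Y w == y)%:R - pmf P Y y).

Lemma diff_eq (A B : eqType) (X : Omega -> A) (Y : Omega -> B) x y :
  pmf2 P X Y x y - pmf P X x * pmf P Y y = \sum_(w | X w == x) hh Y y w.
Proof.
rewrite /hh /pmf2 /pmf mulr_suml.
under [RHS]eq_bigr => w _ do rewrite mulrBr.
rewrite sumrB; congr (_ - _).
rewrite [RHS]big_mkcond [LHS]big_mkcond; apply: eq_bigr => w _.
by case: (X w == x); case: (Y w == y); rewrite /= ?mulr1 ?mulr0.
Qed.

Lemma pmf2_le (A B : eqType) (X : Omega -> A) (Y : Omega -> B) x y :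
  pmf2 P X Y x y <= pmf P X x.
Proof.
rewrite /pmf2 /pmf [X in X <= _]big_mkcond [X in _ <= X]big_mkcond /=.
apply: ler_sum => w _; case: (X w == x); case: (Y w == y) => //=.
Qed.

Lemma pmf2_ge0 (A B : eqType) (X : Omega -> A) (Y : Omega -> B) x y :
  0 <= pmf2 P X Y x y.
Proof. by apply: sumr_ge0 => w _. Qed.

Lemma UD_alt (A B : eqType) (X : Omega -> A) (Y : Omega -> B) :
  UD P X Y = \sum_(y <- vals Y) \sum_(x <- vals X) `|\sum_(w | X w == x) hh Y y w|.
Proof.
rewrite /UD; under eq_bigr => x _ do rewrite mulr_sumr.
rewrite exchange_big /=; apply: eq_bigr => y _; apply: eq_bigr => x _.
rewrite -diff_eq /cond_pmf.
have hp := pmf_ge0 X x.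
have [hz|hnz] := eqVneq (pmf P X x) 0.
  have ha : pmf2 P X Y x y = 0.
    by apply/eqP; rewrite eq_le pmf2_ge0 andbT -hz pmf2_le.
  by rewrite hz ha !mul0r subr0 normr0.
rewrite -[X in X * _]ger0_norm // -normrM; congr `|_|.
by rewrite mulrBr mulrCA mulfV // mulr1.
Qed.

Lemma UD_ge0 (A B : eqType) (X : Omega -> A) (Y : Omega -> B) : 0 <= UD P X Y.
Proof.
rewrite UD_alt; apply: sumr_ge0 => y _; apply: sumr_ge0 => x _; exact: normr_ge0.
Qed.

Lemma UD_mono (A A' B : eqType) (X : Omega -> A) (X' : Omega -> A') (Y : Omega -> B) :
  (forall w1 w2, X' w1 = X' w2 -> X w1 = X w2) -> UD P X Y <= UD P X' Y.
Proof.
move=> hdet; rewrite !UD_alt; apply: ler_sum => y _.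
rewrite abs_sum_sign; apply: sign_bound.
  by move=> w; case: ifP; rewrite ?normrN normr1.
by move=> w1 w2 /hdet ->.
Qed.

Lemma Dep_mono (A A' B : eqType) (X : Omega -> A) (X' : Omega -> A') (Y : Omega -> B) :
  (forall w1 w2, X' w1 = X' w2 -> X w1 = X w2) -> Dep P X Y <= Dep P X' Y.
Proof.
move=> hdet; rewrite /Dep; apply: ler_wpM2r; first by rewrite invr_ge0 UD_ge0.
exact: UD_mono.
Qed.

Lemma Dep_ge0 (A B : eqType) (X : Omega -> A) (Y : Omega -> B) : 0 <= Dep P X Y.
Proof. by rewrite /Dep divr_ge0 ?UD_ge0. Qed.
End Aux.
Lemma fact_sum (n : nat) : (0 < n)%N ->
  (\sum_(k < n.+1) 'C(n.-1, k) * (k`! * (n - k - 1)`!))%N = n`!.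
Proof.
case: n => // m _ /=.
rewrite big_ord_recr /= bin_small // mul0n addn0.
rewrite (eq_bigr (fun _ => m`!)); last first.
  move=> k _ /=; rewrite -subnDA addnC subnDA subn1 /=.
  have hk : (k <= m)%N by rewrite -ltnS ltn_ord.
  by rewrite bin_fact.
by rewrite sum_nat_const card_ord factS.
Qed.

Lemma weights_sum (R : realFieldType) (n : nat) (i : 'I_n) :
  \sum_(S : {set 'I_n} | i \notin S)
     ((#|S|`! * (n - #|S| - 1)`!)%:R / (n`!)%:R) = 1 :> R.
Proof.
rewrite -mulr_suml -natr_sum.
suff -> : (\sum_(S : {set 'I_n} | i \notin S) (#|S|`! * (n - #|S| - 1)`!))%N = n`!.
  by rewrite mulfV // pnatr_eq0 -lt0n fact_gt0.
rewrite (partition_big (fun S : {set 'I_n} => (inord #|S| : 'I_n.+1)) xpredT) //=.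
rewrite -(fact_sum (n := n)); last by case: n i => [[]|].
apply: eq_bigr => k _.
rewrite (eq_bigr (fun _ => k`! * (n - k - 1)`!)%N); last first.
  move=> S /andP[_ /eqP <-]; rewrite inordK //.
  by rewrite ltnS -[X in (_ <= X)%N]card_ord max_card.
rewrite sum_nat_const; congr (_ * _)%N.
rewrite -[n in 'C(n.-1, _)]card_ord -(cardsC1 i) -cards_draws.
apply: eq_card => S; rewrite !inE; change ((i \notin S) && (inord #|S| == k) = (S \subset [set~ i]) && (#|S| == k)).
have -> : (inord #|S| == k) = (#|S| == k).
  rewrite -(inj_eq val_inj) /= inordK //.
  by rewrite ltnS -[X in (_ <= X)%N]card_ord max_card.
congr andb; apply/idP/idP.
  by move=> hi; apply/subsetP => j hj; rewrite !inE; apply: contraNneq hi => <-.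
by move/subsetP => h; apply/negP => /h; rewrite !inE eqxx.
Qed.

Section Feat.
Variables (R : realFieldType) (Omega : finType) (P : {ffun Omega -> R}).
Variables (n : nat) (T : 'I_n -> eqType) (X : forall i : 'I_n, Omega -> T i).

Lemma XS_det (S S' : {set 'I_n}) : S \subset S' ->
  forall w1 w2, XS X S' w1 = XS X S' w2 -> XS X S w1 = XS X S w2.
Proof.
move=> sub w1 w2; rewrite /XS => /eq_in_map h; apply/eq_in_map => j.
rewrite mem_enum => hj; apply: h; rewrite mem_enum; exact: (subsetP sub j hj).
Qed.

Lemma Xi_det (i : 'I_n) w1 w2 : XS X [set i] w1 = XS X [set i] w2 -> X i w1 = X i w2.
Proof.
rewrite /XS enum_set1 /= => [[h]].
have := congr1 (tagged_as (Tagged T (X i w1))) h.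
by rewrite !tagged_asE.
Qed.

Lemma UD_set0 (B : eqType) (Y : Omega -> B) : is_prob P -> UD P (XS X set0) Y = 0.
Proof.
move=> [hP hs]; rewrite UD_alt //; apply: big1 => y _; apply: big1 => x _.
have hc : forall w, XS X set0 w = [::] by move=> w; rewrite /XS enum_set0.
under eq_bigl => w do rewrite hc.
case: (eqVneq [::] x) => [_|hne]; last by rewrite big_pred0 ?normr0.
rewrite (eq_bigl xpredT) // /hh.
under eq_bigr do rewrite mulrBr.
rewrite sumrB -mulr_suml hs mul1r /pmf.
rewrite [X in _ - X]big_mkcond /=.
rewrite -sumrB big1 ?normr0 // => w _.
by case: (Y w == y); rewrite ?mulr1 ?mulr0 subrr.
Qed.
End Feat.

Theorem mainTheorem5 (R : realFieldType) (Omega : finType) (P : {ffun Omega -> R})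
  (n : nat) (T : 'I_n -> eqType) (X : forall i : 'I_n, Omega -> T i)
  (B : eqType) (Y : Omega -> B) :
  is_prob P -> ~ as_constant P Y ->
  forall i : 'I_n,
    Dep P (X i) Y / n%:R <= FI P X Y i /\ FI P X Y i <= DepS P X [set: 'I_n] Y.
Proof.
move=> hprob _ i; have [hP hs] := hprob.
have hmono : forall S S' : {set 'I_n}, S \subset S' -> DepS P X S Y <= DepS P X S' Y.
  by move=> S S' sub; apply: Dep_mono => //; apply: XS_det.
have hd : forall S : {set 'I_n}, 0 <= DepS P X (i |: S) Y - DepS P X S Y.
  by move=> S; rewrite subr_ge0; apply: hmono; apply: subsetUr.
have hw : forall S : {set 'I_n}, 0 <= (#|S|`! * (n - #|S| - 1)`!)%:R / (n`!)%:R :> R.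
  by move=> S; rewrite divr_ge0 ?ler0n.
have hge : forall S, 0 <= DepS P X S Y by move=> S; apply: Dep_ge0.
split.
  rewrite /FI (bigD1 set0) /=; last by rewrite inE.
  rewrite -[Dep P (X i) Y / _]addr0; apply: lerD; last by apply: sumr_ge0 => S _; apply: mulr_ge0.
  rewrite setU0 cards0 fact0 mul1n subn0.
  have h0 : DepS P X set0 Y = 0 by rewrite /DepS /Dep UD_set0 // mul0r.
  have h1 : Dep P (X i) Y <= DepS P X [set i] Y.
    by apply: Dep_mono => //; apply: Xi_det.
  rewrite h0 subr0.
  have [m hm] : exists m, n = m.+1 by exists n.-1; rewrite prednK // (leq_ltn_trans (leq0n i) (ltn_ord i)).
  have -> : ((n - 1)`!)%:R / (n`!)%:R = (n%:R)^-1 :> R.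
    rewrite hm subn1 /= factS natrM invfM mulrCA mulfV ?mulr1 //.
    by rewrite pnatr_eq0 -lt0n fact_gt0.
  by rewrite mulrC; apply: ler_wpM2l => //; rewrite invr_ge0 ler0n.
rewrite /FI.
apply: le_trans (_ : \sum_(S : {set 'I_n} | i \notin S)
   ((#|S|`! * (n - #|S| - 1)`!)%:R / (n`!)%:R) * DepS P X [set: 'I_n] Y <= _).
  apply: ler_sum => S _; apply: ler_wpM2l => //.
  have := hmono (i |: S) [set: 'I_n] (subsetT _); have := hge S; lra.
by rewrite -mulr_suml weights_sum mul1r.
Qed.
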